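(* Let $I$ be a conditional indicator w.r.t. $\mathcal{H}$ whose domain $\mathbb{D}_I$ is $\mathcal{H}$-decomposable. If $I$ is sub-additive, then $1_HI(X)\le I(1_HX)$ for all $H\in\mathcal{H}$ and $X\in\mathbb{D}_I$. Moreover, if $I$ is additive, then $I$ is regular.
   Context: Let $(\Omega,\mathcal{F},\mathbb{P})$ be a probability space with $\mathcal{F}$ complete, and $\mathcal{H}\subseteq\mathcal{F}$ a complete sub-$\sigma$-algebra. $\overline{\mathbb{R}}=\mathbb{R}\cup\{\pm\infty\}$ with conventions $r\pm\infty=\pm\infty$, $\infty-\infty=0$, $\infty+\infty=\infty$, $0\times(\pm\infty)=0$; $\mathbb{L}^0(G,\mathcal{G})$ is the set of $\mathcal{G}$-measurable random variables a.s. valued in $G$. $\operatorname{ess\,sup}_{\mathcal{H}}(X)$ is the smallest $\mathcal{H}$-measurable random variable dominating $X$ a.s., $\operatorname{ess\,inf}_{\mathcal{H}}(X)=-\operatorname{ess\,sup}_{\mathcal{H}}(-X)$. A conditional indicator w.r.t. $\mathcal{H}$ is a map $I:\mathbb{D}_I\to\mathbb{L}^0(\overline{\mathbb{R}},\mathcal{H})$, $0\in\mathbb{D}_I\subseteq\mathbb{L}^0(\overline{\mathbb{R}},\mathcal{F})$, with $I(X)\in[\operatorname{ess\,inf}_{\mathcal{H}}(X),\operatorname{ess\,sup}_{\mathcal{H}}(X)]$ a.s. and $\mathbb{D}_I+\mathbb{L}^0(\overline{\mathbb{R}},\mathcal{H})\subseteq\mathbb{D}_I$. $\mathbb{D}_I$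 is $\mathcal{H}$-decomposable if $X1_H+Y1_{\Omega\setminus H}\in\mathbb{D}_I$ for $X,Y\in\mathbb{D}_I$, $H\in\mathcal{H}$. Sub-additive: $I(X+Y)\le I(X)+I(Y)$; additive: equality. $I$ is regular if $\mathbb{D}_I$ is $\mathcal{H}$-decomposable and for $X,Y\in\mathbb{D}_I$, $H\in\mathcal{H}$, $X1_H=Y1_H$ implies $I(X)1_H=I(Y)1_H$. *)

(* Defs.v *)
From HB Require Import structures.
From mathcomp Require Import all_boot all_order all_algebra.
From mathcomp Require Import all_classical all_reals all_analysis measurable_realfun.
Set Implicit Arguments. Unset Strict Implicit. Unset Printing Implicit Defensive.
Import Order.TTheory GRing.Theory Num.Theory.
Local Open Scope classical_set_scope.
Local Open Scope ring_scope.
Local Open Scope ereal_scope.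

(** Addition on extended reals with the paper's convention
    r +- oo = +-oo, +oo + +oo = +oo, -oo + -oo = -oo, and +oo - oo = 0
    (MathComp's [adde] sets +oo + -oo = -oo instead). *)
Definition addx {R : realType} (x y : \bar R) : \bar R :=
  match x, y with
  | +oo, -oo => 0
  | -oo, +oo => 0
  | _, _ => x + y
  end.

Definition addrv {T} {R : realType} (X Y : T -> \bar R) : T -> \bar R :=
  fun w => addx (X w) (Y w).

(** 1_A X  (with 0 * (+-oo) = 0, as in MathComp's [mule]) *)
Definition indmul {T} {R : realType} (A : set T) (X : T -> \bar R) : T -> \bar R :=
  fun w => (\1_A w)%:E * X w.

Section defs.
Context d (T : measurableType d) (R : realType) (P : probability T R).

Definition F_complete : Prop :=
  forall N : set T, P.-negligible N -> measurable N.

Definition complete_sub_sigma (H : set (set T)) : Prop :=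
  [/\ sigma_algebra setT H, (forall A, H A -> measurable A)
    & (forall N : set T, P.-negligible N -> H N)].

Definition Fmeas (X : T -> \bar R) : Prop := measurable_fun setT X.

Definition Hmeas (H : set (set T)) (X : T -> \bar R) : Prop :=
  forall B : set (\bar R), measurable B -> H (X @^-1` B).

Definition is_esssupH (H : set (set T)) (X Z : T -> \bar R) : Prop :=
  [/\ Hmeas H Z, {ae P, forall w, X w <= Z w}
    & forall Z', Hmeas H Z' -> {ae P, forall w, X w <= Z' w} ->
         {ae P, forall w, Z w <= Z' w}].

Definition is_essinfH (H : set (set T)) (X Z : T -> \bar R) : Prop :=
  is_esssupH H (fun w => - X w) (fun w => - Z w).

(** Random variables are
    represented by functions; since the paper works on L^0 (a.s. classes),
    D is required to be closed under a.s. equality and I to be compatible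
    with it (I is a well-defined map on classes). *)
Definition cond_indicator (H : set (set T)) (D : set (T -> \bar R))
    (I : (T -> \bar R) -> (T -> \bar R)) : Prop :=
  D (fun=> 0) /\
  [/\ (forall X, D X -> Fmeas X),
      (forall X Y, D X -> Fmeas Y -> {ae P, forall w, X w = Y w} ->
          D Y /\ {ae P, forall w, I X w = I Y w}),
      (forall X, D X -> Hmeas H (I X)),
      (forall X, D X ->
          (forall Z, is_esssupH H X Z -> {ae P, forall w, I X w <= Z w}) /\
          (forall Z, is_essinfH H X Z -> {ae P, forall w, Z w <= I X w}))
    & (forall X Y, D X -> Hmeas H Y -> D (addrv X Y))].

Definition ci_decomposable (H : set (set T)) (D : set (T -> \bar R)) : Prop :=
  forall X Y A, D X -> D Y -> H A -> D (addrv (indmul A X) (indmul (~` A) Y)).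

Definition ci_subadditive (D : set (T -> \bar R))
    (I : (T -> \bar R) -> (T -> \bar R)) : Prop :=
  forall X Y, D X -> D Y -> D (addrv X Y) ->
    {ae P, forall w, I (addrv X Y) w <= addx (I X w) (I Y w)}.

Definition ci_additive (D : set (T -> \bar R))
    (I : (T -> \bar R) -> (T -> \bar R)) : Prop :=
  forall X Y, D X -> D Y -> D (addrv X Y) ->
    {ae P, forall w, I (addrv X Y) w = addx (I X w) (I Y w)}.

Definition ci_regular (H : set (set T)) (D : set (T -> \bar R))
    (I : (T -> \bar R) -> (T -> \bar R)) : Prop :=
  ci_decomposable H D /\
  forall X Y A, D X -> D Y -> H A ->
    {ae P, forall w, indmul A X w = indmul A Y w} ->
    {ae P, forall w, indmul A (I X) w = indmul A (I Y) w}.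

End defs.

(* Main.v *)
Require Import Defs.
From HB Require Import structures.
From mathcomp Require Import all_boot all_order all_algebra.
From mathcomp Require Import all_classical all_reals all_analysis measurable_realfun.
Import Order.TTheory GRing.Theory Num.Theory.
Local Open Scope classical_set_scope.
Local Open Scope ereal_scope.
Lemma natSinv_lt (R : realType) (e : R) : (0 < e)%R -> exists n : nat, (n.+1%:R^-1 < e)%R.
Proof.
move=> e0; have e0' : (0 <= e^-1)%R by rewrite invr_ge0 ltW.
have := archi_boundP e0'.
set k := Num.bound _ => hk; exists k.
rewrite -[e]invrK ltf_pV2 ?posrE ?invr_gt0 //.
by rewrite (lt_le_trans hk) // ler_nat.
Qed.

Lemma sigT_in (T : Type) (H : set (set T)) : sigma_algebra setT H -> H setT.
Proof. by case=> H0 HC _; rewrite -(setD0 setT); exact: HC. Qed.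

Lemma sigC (T : Type) (H : set (set T)) A : sigma_algebra setT H -> H A -> H (~` A).
Proof. by case=> H0 HC _ HA; rewrite -setTD; exact: HC. Qed.

Lemma sigU (T : Type) (H : set (set T)) A B : sigma_algebra setT H -> H A -> H B -> H (A `|` B).
Proof.
move=> sH HA HB; case: (sH) => H0 _ HU.
rewrite -bigcup2E; apply: HU => -[|[|n]] //=.
Qed.

Lemma sigI (T : Type) (H : set (set T)) A B : sigma_algebra setT H -> H A -> H B -> H (A `&` B).
Proof.
move=> sH HA HB; rewrite -[A `&` B]setCK setCI.
by apply: sigC => //; apply: sigU => //; apply: sigC.
Qed.

Lemma sigcap (T : Type) (H : set (set T)) (F : (set T)^nat) : sigma_algebra setT H ->
  (forall n, H (F n)) -> H (\bigcap_n F n).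
Proof.
move=> sH HF; rewrite -[X in H X]setCK setC_bigcap; apply: sigC => //.
case: (sH) => _ _ HU; apply: HU => n; exact: sigC.
Qed.

Lemma envelope d (T : measurableType d) (R : realType) (P : probability T R)
  (H : set (set T)) : complete_sub_sigma P H -> forall S : set T,
  exists B, [/\ H B, S `<=` B &
    forall B', H B' -> S `<=` B' -> P (B `\` B') = 0].
Proof.
case=> sH HF Hneg S.
pose M := [set P B | B in [set B | H B /\ S `<=` B]].
pose m := ereal_inf M.
have m0 : 0 <= m by apply: le_ereal_inf_tmp => _ [B _ <-]; exact: measure_ge0.
have m1 : m <= 1.
  rewrite -(probability_setT P); apply: ereal_inf_lbound.
  by exists setT => //; split; [exact: sigT_in|].
have mfin : m \is a fin_num by rewrite ge0_fin_numE // (le_lt_trans m1) // ltry.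
have : forall n : nat, exists B, (H B /\ S `<=` B) /\ P B < m + (n.+1%:R^-1)%:E.
  move=> n; have : m < m + (n.+1%:R^-1)%:E by rewrite lteDl // lte_fin invr_gt0.
  by move/ereal_inf_lt => [_ [B HB <-] PB]; exists B.
move/choice => [Bn HBn].
pose B := \bigcap_n Bn n.
have HB : H B by apply: sigcap => // n; exact: (HBn n).1.1.
have SB : S `<=` B by move=> w Sw n _; exact: (HBn n).1.2.
have mB : measurable B by exact: HF.
have PBm : P B = m.
  apply: le_anti; rewrite andbC; apply/andP; split.
    by apply: ereal_inf_lbound; exists B.
  apply/lee_addgt0Pr => e e0.
  have [n hn] := @natSinv_lt R e e0.
  apply: (le_trans (y := P (Bn n))).
    apply: le_measure; rewrite ?inE //; first exact: HF (HBn n).1.1.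
    by move=> w; apply.
  apply: ltW; apply: (lt_le_trans (HBn n).2).
  by rewrite leeD2l // lee_fin ltW.
exists B; split => // B' HB' SB'.
have HBB' : H (B `&` B') by exact: sigI.
have mle : m <= P (B `&` B').
  by apply: ereal_inf_lbound; exists (B `&` B') => //; split => // w Sw; split; [exact: SB|exact: SB'].
have fin2 : P (B `&` B') \is a fin_num.
  rewrite ge0_fin_numE ?measure_ge0 // (le_lt_trans _ (ltry 1)) //.
  by rewrite -(probability_setT P); apply: le_measure; rewrite ?inE //; exact: HF.
have := measureDI P mB (HF _ HB').
move=> eq; apply: le_anti; rewrite measure_ge0 andbT.
rewrite -(leeD2rE _ _ fin2) add0e -eq; by move: mle; rewrite -PBm.
Qed.

Lemma ratdense (R : realType) (x y : \bar R) :
  (forall q : rat, y < (ratr q)%:E -> x <= (ratr q)%:E) -> x <= y.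
Proof.
move=> hq; case: y hq => [r| |] hq; [|by rewrite leey|].
- apply/lee_addgt0Pr => e e0.
  have /rat_in_itvoo[q] : (r < r + e)%R by rewrite ltrDl.
  rewrite in_itv /= => /andP[h1 h2].
  have := hq q; rewrite lte_fin h1 => /(_ isT) hx.
  by apply: (le_trans hx); rewrite lee_fin ltW.
- case: x hq => [s||] hq //.
  + have /rat_in_itvoo[q] : (s - 1 < s)%R by rewrite ltrBlDr ltrDl.
    rewrite in_itv /= => /andP[h1 h2].
    by have := hq q (ltNyr _); rewrite lee_fin leNgt h2.
  + have /rat_in_itvoo[q] : (0 < 1 :> R)%R by [].
    by move=> _; have := hq q (ltNyr _); rewrite leNgt ltry.
Qed.

Lemma HmeasP d (T : measurableType d) (R : realType) (H : set (set T)) (f : T -> \bar R) :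
  sigma_algebra setT H ->
  Hmeas H f <-> measurable_fun (setT : set (g_sigma_algebraType H)) f.
Proof.
move=> sH; split.
- move=> hf _ B mB; rewrite setTI.
  by rewrite (measurable_g_measurableTypeE sH); exact: hf.
- move=> hf B mB; have := hf measurableT B mB.
  by rewrite setTI (measurable_g_measurableTypeE sH).
Qed.

Lemma sig_prop (T : Type) (H : set (set T)) (p : Prop) :
  sigma_algebra setT H -> H [set _ : T | p].
Proof.
move=> sH; case: (pselect p) => h.
  by rewrite (_ : [set _ | p] = setT); [exact: sigT_in|apply/seteqP; split].
by rewrite (_ : [set _ | p] = set0); [case: sH|apply/seteqP; split].
Qed.

Lemma Hmeas_ite d (T : measurableType d) (R : realType) (H : set (set T)) (A : set T) (a b : \bar R) :
  sigma_algebra setT H -> H A -> Hmeas H (fun w => if `[< A w >] then a else b).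
Proof.
move=> sH HA B mB.
have -> : (fun w => if `[< A w >] then a else b) @^-1` B =
  (A `&` [set _ | B a]) `|` (~` A `&` [set _ | B b]).
  apply/seteqP; split => w /=.
    by case: asboolP => Aw Bw; [left|right].
  by case=> -[Aw Bw]; case: asboolP.
apply: sigU => //; apply: sigI => //; try exact: sigC.
- exact: sig_prop.
- exact: sig_prop.
Qed.

Lemma esssup_exists d (T : measurableType d) (R : realType) (P : probability T R)
  (H : set (set T)) (Y : T -> \bar R) :
  complete_sub_sigma P H -> Fmeas Y -> exists Z, is_esssupH P H Y Z.
Proof.
move=> cH mY; case: (cH) => sH HF Hneg.
pose qk (k : nat) : rat := odflt 0%R (unpickle k).
pose S k := [set w | ((ratr (qk k) : R))%:E < Y w].
have := fun k => @envelope d T R P H cH (S k).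
move/choice => [Bk HBk].
pose f k w : \bar R := if `[< Bk k w >] then +oo else (ratr (qk k))%:E.
pose Z w := einfs (fun k => f k w) 0%N.
have Zle k w : Z w <= f k w.
  by apply: ereal_inf_lbound; exists k.
have YZ w : Y w <= Z w.
  apply: le_ereal_inf_tmp => _ [k _ <-].
  rewrite /f; case: asboolP => h; first exact: leey.
  rewrite leNgt; apply/negP => hY; apply: h.
  by have [_ + _] := HBk k; apply.
exists Z; split.
- apply/HmeasP => //.
  have mf : forall k, measurable_fun (setT : set (g_sigma_algebraType H)) (f k).
    by move=> k; apply/HmeasP => //; apply: Hmeas_ite => //; have [] := HBk k.
  exact: (@measurable_fun_einfs _ (g_sigma_algebraType H) R setT f mf 0%N).
- exact: aeW.
move=> Z' HZ' hae.
have hae2 : P.-negligible (~` [set w | Y w <= Z' w]) by exact: hae.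
have [N [mN PN0 NN]] := hae2.
have HN : H N by apply: Hneg; exists N; split.
pose C k := [set w | ((ratr (qk k) : R))%:E < Z' w] `|` N.
have HC k : H (C k).
  apply: sigU => //.
  have -> : [set w | ((ratr (qk k) : R))%:E < Z' w] =
      Z' @^-1` `]((ratr (qk k) : R))%:E, +oo[%classic.
    by apply/seteqP; split => w /=; rewrite in_itv /= ?andbT.
  exact: HZ' (emeasurable_itv _).
have SC k : S k `<=` C k.
  move=> w Sw; case: (pselect (N w)) => hN; [by right|left].
  have : Y w <= Z' w by apply: contrapT => h; apply: hN; apply: NN.
  exact: lt_le_trans Sw.
have P0 k : P (Bk k `\` C k) = 0 by have [_ _ ->] := HBk k.
pose Bad := N `|` \bigcup_k (Bk k `\` C k).
suff: P.-negligible (~` [set w | Z w <= Z' w]) by [].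
apply: (@negligibleS _ _ _ P Bad).
- move=> w /= hw; apply: contrapT => hB; apply: hw.
  apply: ratdense => q hq.
  have hk : qk (pickle q) = q by rewrite /qk pickleK.
  apply: le_trans (Zle (pickle q) w) _.
  rewrite /f; case: asboolP => hb; last by rewrite hk.
  exfalso; apply: hB; case: (pselect (C (pickle q) w)) => hc.
    case: hc => [h|h]; last by left.
    by move: h; rewrite hk => h; have := lt_trans hq h; rewrite ltxx.
  by right; exists (pickle q).
- apply: negligibleU; first by exists N; split.
  apply: negligible_bigcup => k; exists (Bk k `\` C k); split => //; last exact: P0.
  apply: measurableD; apply: HF; [by have [] := HBk k| exact: HC].
Qed.

Lemma ae2 d (T : measurableType d) (R : realType) (P : probability T R)
  (Q1 Q2 Q3 : T -> Prop) :
  {ae P, forall w, Q1 w} -> {ae P, forall w, Q2 w} ->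
  (forall w, Q1 w -> Q2 w -> Q3 w) -> {ae P, forall w, Q3 w}.
Proof.
move=> h1 h2 h.
have n1 : P.-negligible (~` [set w | Q1 w]) by exact: h1.
have n2 : P.-negligible (~` [set w | Q2 w]) by exact: h2.
suff : P.-negligible (~` [set w | Q3 w]) by [].
apply: (negligibleS _ (negligibleU n1 n2)).
move=> w /= h3; apply: contrapT => hn; apply: h3; apply: h.
- by apply: contrapT => q; apply: hn; left.
- by apply: contrapT => q; apply: hn; right.
Qed.

Lemma I_on d (T : measurableType d) (R : realType) (P : probability T R)
  (H : set (set T)) (D : set (T -> \bar R)) (I : (T -> \bar R) -> (T -> \bar R))
  (Y : T -> \bar R) (A : set T) :
  complete_sub_sigma P H -> cond_indicator P H D I -> D Y -> H A ->
  (forall w, A w -> Y w = 0) ->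
  {ae P, forall w, A w -> I Y w <= 0} /\ {ae P, forall w, A w -> 0 <= I Y w}.
Proof.
move=> cH ci DY HA Y0; case: (cH) => sH HF Hneg.
case: ci => D0 [DF Dae DH Dbd Dadd].
have mY := DF Y DY.
pose G w : \bar R := if `[< (~` A) w >] then +oo else 0.
have HG : Hmeas H G by apply: Hmeas_ite => //; exact: sigC.
have GA w : A w -> G w = 0.
  by move=> Aw; rewrite /G; case: asboolP => // h; exfalso; apply: h.
have [bu bl] := Dbd Y DY.
split.
- have [Z hZ] := @esssup_exists d T R P H Y cH mY.
  have h1 := bu Z hZ.
  case: hZ => _ _ Zmin.
  have h2 : {ae P, forall w, Z w <= G w}.
    apply: Zmin => //; apply: aeW => w.
    rewrite /G; case: asboolP => h; first exact: leey.
    by rewrite Y0 //; apply: contrapT.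
  apply: (@ae2 _ _ _ P _ _ (fun w => A w -> I Y w <= 0) h1 h2) => w a b Aw.
  by apply: (le_trans a); rewrite -(GA w Aw).
- have mNY : Fmeas (fun w => - Y w).
    exact: (measurableT_comp (@oppe_measurable R setT) mY).
  have [Z0 hZ0] := @esssup_exists d T R P H _ cH mNY.
  have hinf : is_essinfH P H Y (fun w => - Z0 w).
    rewrite /is_essinfH (_ : (fun w => - - Z0 w) = Z0) //.
    by apply/funext => w; rewrite oppeK.
  have h1 := bl _ hinf.
  case: hZ0 => _ _ Zmin.
  have h2 : {ae P, forall w, Z0 w <= G w}.
    apply: Zmin => //; apply: aeW => w.
    rewrite /G; case: asboolP => h; first exact: leey.
    by rewrite Y0 ?oppe0 //; apply: contrapT.
  apply: (@ae2 _ _ _ P _ _ (fun w => A w -> 0 <= I Y w) h1 h2) => w a b Aw.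
  apply: le_trans a; rewrite oppe_ge0.
  by rewrite -(GA w Aw).
Qed.

Lemma indmul_in (T : Type) (R : realType) (A : set T) (X : T -> \bar R) w :
  A w -> indmul A X w = X w.
Proof. by move=> Aw; rewrite /indmul indicE mem_set // mul1e. Qed.

Lemma indmul_out (T : Type) (R : realType) (A : set T) (X : T -> \bar R) w :
  ~ A w -> indmul A X w = 0.
Proof.
move=> Aw; rewrite /indmul indicE.
have -> : (w \in A) = false by apply/negP; rewrite inE.
by rewrite mul0e.
Qed.

Lemma addx0 (R : realType) (x : \bar R) : addx x 0 = x.
Proof. by case: x => [r| |] //=; rewrite adde0. Qed.

Lemma add0x (R : realType) (x : \bar R) : addx 0 x = x.
Proof. by case: x => [r| |] //=; rewrite add0e. Qed.

Lemma addx_le (R : realType) (x y : \bar R) : y <= 0 -> addx x y <= x.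
Proof.
case: x => [r| |]; case: y => [s| |] //= h; rewrite ?leey ?leNye //.
by rewrite -EFinD lee_fin gerDl -lee_fin.
Qed.

Lemma decompX (T : Type) (R : realType) (A : set T) (X : T -> \bar R) :
  addrv (indmul A X) (indmul (~` A) X) = X.
Proof.
apply/funext => w; rewrite /addrv; case: (pselect (A w)) => h.
  by rewrite indmul_in // indmul_out ?addx0 //= => /(_ h).
by rewrite indmul_out // add0x indmul_in.
Qed.

Lemma decomp0 (T : Type) (R : realType) (A : set T) (X : T -> \bar R) :
  addrv (indmul A X) (indmul (~` A) (fun=> 0)) = indmul A X.
Proof. by apply/funext => w; rewrite /addrv /indmul mule0 addx0. Qed.

Theorem mainTheorem16 (d : measure_display) (T : measurableType d) (R : realType)
  (P : probability T R) (H : set (set T)) (D : set (T -> \bar R))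
  (I : (T -> \bar R) -> (T -> \bar R)) :
  F_complete P -> complete_sub_sigma P H ->
  cond_indicator P H D I -> ci_decomposable H D ->
  (ci_subadditive P D I ->
     forall A X, H A -> D X ->
       {ae P, forall w, indmul A (I X) w <= I (indmul A X) w}) /\
  (ci_additive P D I -> ci_regular P H D I).
Proof.
move=> Fc cH ci dec; case: (cH) => sH HF Hneg.
case: (ci) => D0 [DF Dae DH Dbd Dadd].
have DA (A : set T) (X : T -> \bar R) : H A -> D X -> D (indmul A X).
  by move=> HA DX; rewrite -(@decomp0 _ _ A X); apply: dec.
have DAC (A : set T) (X : T -> \bar R) : H A -> D X -> D (indmul (~` A) X).
  by move=> HA DX; apply: DA => //; exact: sigC.
have out1 (A : set T) (X : T -> \bar R) (w : T) : A w -> indmul (~` A) X w = 0.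
  by move=> Aw; rewrite indmul_out //= => /(_ Aw).
have out2 (A : set T) (X : T -> \bar R) (w : T) : (~` A) w -> indmul A X w = 0.
  by move=> Aw; rewrite indmul_out.
split.
- move=> sub A X HA DX.
  have hs := sub _ _ (DA A X HA DX) (DAC A X HA DX).
  rewrite decompX in hs; have {hs} hs := hs DX.
  have [hV _] := @I_on _ _ _ P H D I _ _ cH ci (DAC A X HA DX) HA (out1 A X).
  have [_ hU] := @I_on _ _ _ P H D I _ _ cH ci (DA A X HA DX) (@sigC _ H A sH HA) (out2 A X).
  have h12 := @ae2 _ _ _ P _ _ (fun w => (A w -> I (indmul (~` A) X) w <= 0) /\
     ((~` A) w -> 0 <= I (indmul A X) w)) hV hU (fun w a b => conj a b).
  apply: (@ae2 _ _ _ P _ _ (fun w => indmul A (I X) w <= I (indmul A X) w) hs h12).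
  move=> w a [b c]; case: (pselect (A w)) => Aw.
    by rewrite indmul_in //; apply: (le_trans a); apply: addx_le; exact: b.
  by rewrite indmul_out //; exact: c.
- move=> add; split => // X Y A DX DY HA hae.
  have key Z : D Z -> {ae P, forall w, A w -> I Z w = I (indmul A Z) w}.
    move=> DZ.
    have hs := add _ _ (DA A Z HA DZ) (DAC A Z HA DZ).
    rewrite decompX in hs; have {hs} hs := hs DZ.
    have [hV1 hV2] := @I_on _ _ _ P H D I _ _ cH ci (DAC A Z HA DZ) HA (out1 A Z).
    have h12 := @ae2 _ _ _ P _ _ (fun w => A w -> I (indmul (~` A) Z) w = 0) hV1 hV2
      (fun w a b Aw => le_anti (introT andP (conj (a Aw) (b Aw)))).
    apply: (@ae2 _ _ _ P _ _ (fun w => A w -> I Z w = I (indmul A Z) w) hs h12).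
    by move=> w a b Aw; rewrite a b // addx0.
  have [_ hXY] := Dae _ _ (DA A X HA DX) (DF _ (DA A Y HA DY)) hae.
  have h1 := @ae2 _ _ _ P _ _ (fun w => A w -> I X w = I (indmul A Y) w) (key X DX) hXY
    (fun w a b Aw => etrans (a Aw) b).
  apply: (@ae2 _ _ _ P _ _ (fun w => indmul A (I X) w = indmul A (I Y) w) h1 (key Y DY)).
  move=> w a b; case: (pselect (A w)) => Aw.
    by rewrite !indmul_in // a // b.
  by rewrite !indmul_out.
Qed.
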